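(* Let $G$ be a maximal subgroup of a completely simple semigroup $S$. Let $\sigma : X^+ \to G$ be a semigroup choice of generators for $G$ and $\tau : Y^+ \to S$ a semigroup choice of generators for $S$ such that $X \subseteq Y$ and $\sigma$ is the restriction of $\tau$ to $X^+$. Then $L_\sigma(G) = L_\tau(S) \cap \hat{X}^*$.
   Context: Maps are written on the right. $X^*$, $X^+$ are the free monoid and free semigroup on $X$. A semigroup is completely simple if it has no proper ideals and has a primitive idempotent (an idempotent $e$ with: every idempotent $f$ such that $ef = fe = f$ equals $e$). A maximal subgroup is a subsemigroup which is a group under the inherited multiplication and is contained in no larger such. For a monoid $M$ and surjective morphism $\sigma : X^* \to M$, let $\overline{X} = \{\overline{x} : x \in X\}$ be new symbols ($\overline{Y}$ similarly, with $\overline{X} \subseteq \overline{Y}$ when $X \subseteq Y$), $\hat{X} = X \cup \overline{X}$; the loop automaton has vertex set $M$, for each $a \in M$, $x \in X$ an edge $a \to a(x\sigma)$ labelled $x$ and an edge $a(x\sigma) \to a$ labelled $\overline{x}$; the loop problem $L_\sigma(M) \subseteq \hat{X}^*$ is the set of labels of paths from the identity to the identity. For a semigroup $T$ with surjective morphism $\sigma : X^+ \to T$, $T^1$ denotes $T$ with a new identity adjoined (even if $T$ already has one), $\sigma^1 : X^* \to T^1$ the extension, and $L_\sigma(T) := L_{\sigma^1}(T^1)$ (this applies to both $G$ and $S$ here). *)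

(* Defs.v *)
From Stdlib Require Import List.
Import ListNotations.
Set Implicit Arguments.

Definition associative_op {T : Type} (mul : T -> T -> T) : Prop :=
  forall a b c, mul a (mul b c) = mul (mul a b) c.

Definition is_ideal {T : Type} (mul : T -> T -> T) (I : T -> Prop) : Prop :=
  (exists a, I a) /\ (forall s a, I a -> I (mul s a) /\ I (mul a s)).

Definition is_idempotent {T : Type} (mul : T -> T -> T) (e : T) : Prop :=
  mul e e = e.

Definition primitive_idempotent {T : Type} (mul : T -> T -> T) (e : T) : Prop :=
  is_idempotent mul e /\
  (forall f, is_idempotent mul f -> mul e f = f -> mul f e = f -> f = e).

Definition completely_simple {T : Type} (mul : T -> T -> T) : Prop :=
  (forall I, is_ideal mul I -> forall s, I s) /\
  (exists e, primitive_idempotent mul e).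

Definition subsemigroup {T : Type} (mul : T -> T -> T) (H : T -> Prop) : Prop :=
  forall a b, H a -> H b -> H (mul a b).

Definition is_subgroup {T : Type} (mul : T -> T -> T) (H : T -> Prop) : Prop :=
  subsemigroup mul H /\
  exists e, H e /\
    (forall a, H a -> mul e a = a /\ mul a e = a) /\
    (forall a, H a -> exists b, H b /\ mul a b = e /\ mul b a = e).

Definition maximal_subgroup {T : Type} (mul : T -> T -> T) (G : T -> Prop) : Prop :=
  is_subgroup mul G /\
  (forall H, is_subgroup mul H -> (forall a, G a -> H a) -> forall a, H a -> G a).

(* Value of a word in the free semigroup under the morphism induced by f:
   evalw a [y1;...;yn] = a (f y1) ... (f yn);
   word_value y w = value of the nonempty word y :: w. *)
Fixpoint evalw {A T : Type} (mul : T -> T -> T) (f : A -> T) (a : T) (w : list A) : T :=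
  match w with
  | [] => a
  | y :: w' => evalw mul f (mul a (f y)) w'
  end.

Definition word_value {A T : Type} (mul : T -> T -> T) (f : A -> T) (y : A) (w : list A) : T :=
  evalw mul f (f y) w.

(* Hat alphabet: inl x stands for x, inr x for \overline{x}. *)
Definition hat_letter_in {A : Type} (X : A -> Prop) (l : A + A) : Prop :=
  match l with inl x => X x | inr x => X x end.

(* Monoid T^1 (new identity adjoined) represented by option T, None = identity;
   restricted to a subsemigroup P of T (vertex set P^1). *)
Definition vertex {T : Type} (P : T -> Prop) (v : option T) : Prop :=
  match v with None => True | Some t => P t end.

Definition act1 {T : Type} (mul : T -> T -> T) (a : option T) (t : T) : option T :=
  Some (match a with None => t | Some a' => mul a' t end).

(* Paths in the loop automaton of P^1 w.r.t. generators L (a set of letters)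
   with images f:  edge a -> a(x f) labelled x, edge a(x f) -> a labelled xbar. *)
Fixpoint loop_path {A T : Type} (mul : T -> T -> T) (P : T -> Prop) (L : A -> Prop)
    (f : A -> T) (a : option T) (w : list (A + A)) (b : option T) : Prop :=
  match w with
  | [] => a = b
  | l :: w' =>
      exists c, vertex P c /\
        (match l with
         | inl x => L x /\ c = act1 mul a (f x)
         | inr x => L x /\ a = act1 mul c (f x)
         end) /\
        loop_path mul P L f c w' b
  end.

Definition loop_problem {A T : Type} (mul : T -> T -> T) (P : T -> Prop) (L : A -> Prop)
    (f : A -> T) (w : list (A + A)) : Prop :=
  loop_path mul P L f None w None.

(* Main.v *)
Require Import Defs.
From Stdlib Require Import List.

Lemma fwd_lp (S : Type) (mul : S -> S -> S) (G : S -> Prop) (Y : Type) (X : Y -> Prop) (tau : Y -> S) :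
  forall w a b, loop_path mul G X tau a w b ->
    loop_path mul (fun _ => True) (fun _ => True) tau a w b /\ Forall (hat_letter_in X) w.
Proof.
  induction w as [|l w IH]; intros a b H; simpl in *.
  - split; [exact H | constructor].
  - destruct H as [c [Hv [Hl Hp]]].
    destruct (IH _ _ Hp) as [H1 H2].
    destruct l as [x|x]; destruct Hl as [Hx Hc];
      (split; [exists c; split; [destruct c; exact I | split; [split; [exact I | exact Hc] | exact H1]] | constructor; [exact Hx | exact H2]]).
Qed.

Section Bwd.
Variables (S : Type) (mul : S -> S -> S) (Hassoc : associative_op mul)
  (G : S -> Prop) (Y : Type) (X : Y -> Prop) (tau : Y -> S) (e : S)
  (Hclos : subsemigroup mul G)
  (Hid : forall a, G a -> mul e a = a /\ mul a e = a)
  (Hinv : forall a, G a -> exists b, G b /\ mul a b = e /\ mul b a = e)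
  (Hsig_into : forall x, X x -> G (tau x)).

Definition phi (a : option S) : option S :=
  match a with None => None | Some s => Some (mul s e) end.
Definition inv (a : option S) : Prop :=
  match a with None => True | Some s => G (mul s e) end.

Lemma key s t : G t -> mul (mul s t) e = mul s t /\ mul (mul s e) t = mul s t.
Proof.
  intro Ht. destruct (Hid t Ht) as [H1 H2]. split.
  - rewrite <- Hassoc, H2. reflexivity.
  - rewrite <- Hassoc, H1. reflexivity.
Qed.

Lemma bwd_lp : forall w a b, inv a ->
  loop_path mul (fun _ => True) (fun _ => True) tau a w b ->
  Forall (hat_letter_in X) w ->
  loop_path mul G X tau (phi a) w (phi b).
Proof.
  induction w as [|l w IH]; intros a b Ia H HF; simpl in *.
  - subst. reflexivity.
  - destruct H as [c [_ [Hl Hp]]].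
    inversion HF as [|l' w' Hx HF' Heq]; subst.
    destruct l as [x|x]; simpl in Hx; destruct Hl as [_ Hc]; subst;
      pose proof (Hsig_into x Hx) as Gt; destruct (Hid _ Gt) as [Ht1 Ht2].
    + destruct a as [s|]; simpl in *.
      * destruct (key s (tau x) Gt) as [K1 K2].
        assert (Gst : G (mul s (tau x))) by (rewrite <- K2; apply Hclos; assumption).
        exists (Some (mul (mul s (tau x)) e)). simpl. rewrite K1.
        split; [exact Gst|]. split; [split; [exact Hx| unfold act1; rewrite K2; reflexivity]|].
        rewrite <- K1. apply (IH (Some (mul s (tau x)))); simpl; [rewrite K1; exact Gst | exact Hp | exact HF'].
      * exists (Some (mul (tau x) e)). simpl. rewrite Ht2.
        split; [exact Gt|]. split; [split; [exact Hx | reflexivity]|].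
        rewrite <- Ht2. apply (IH (Some (tau x))); simpl; [rewrite Ht2; exact Gt | exact Hp | exact HF'].
    + destruct c as [s|]; simpl in *.
      * destruct (key s (tau x) Gt) as [K1 K2].
        rewrite K1 in Ia.
        destruct (Hinv _ Gt) as [t' [Gt' [Hi1 Hi2]]].
        assert (Gse : G (mul s e)).
        { rewrite <- Hi1, Hassoc. apply Hclos; assumption. }
        exists (Some (mul s e)). simpl. split; [exact Gse|].
        split; [split; [exact Hx | unfold act1; rewrite K1, K2; reflexivity]|].
        apply (IH (Some s)); simpl; assumption.
      * exists None. simpl. split; [exact I|].
        split; [split; [exact Hx | unfold act1; rewrite Ht2; reflexivity]|].
        apply (IH None); simpl; auto.
Qed.
End Bwd.

Theorem theorem5p4
  (S : Type) (mul : S -> S -> S)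
  (Hassoc : associative_op mul)
  (Hcs : completely_simple mul)
  (G : S -> Prop) (HG : maximal_subgroup mul G)
  (Y : Type) (X : Y -> Prop) (tau : Y -> S)
  (* tau : Y^+ -> S is surjective *)
  (Htau : forall s, exists (y : Y) (w : list Y), word_value mul tau y w = s)
  (* sigma := restriction of tau to X^+ maps into G ... *)
  (Hsig_into : forall x, X x -> G (tau x))
  (* ... and is surjective onto G *)
  (Hsig_surj : forall g, G g ->
     exists (x : Y) (w : list Y), X x /\ Forall X w /\ word_value mul tau x w = g) :
  forall w : list (Y + Y),
    loop_problem mul G X tau w <->
    (loop_problem mul (fun _ => True) (fun _ => True) tau w /\ Forall (hat_letter_in X) w).
Proof.
  intro w. unfold loop_problem. split.
  - apply fwd_lp.
  - intros [H1 H2].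
    destruct HG as [[Hclos [e [He [Hid Hinv]]]] _].
    exact (@bwd_lp S mul Hassoc G Y X tau e Hclos Hid Hinv Hsig_into w None None I H1 H2).
Qed.
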